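(* Let $G$ be an arbitrary graph and let $H$ be an odd cycle. Then $AT(G+_S H)=3$.
   Context: For an orientation $D$, a subdigraph is Eulerian if every vertex has equal in- and outdegree in it; $D$ is an AT-orientation if the numbers of Eulerian subgraphs with an even and with an odd number of arcs differ; $AT(G)$ is the smallest $k$ such that $G$ has an AT-orientation of maximum outdegree at most $k-1$. $S(G)$ is obtained from $G$ by subdividing each edge once, with vertex set identified with $V(G)\cup E(G)$. $G+_S H$ has vertex set $(V(G)\cup E(G))\times V(H)$, with $(u_1,u_2)\sim(v_1,v_2)$ iff [$u_1=v_1\in V(G)$ and $u_2v_2\in E(H)$] or [$u_2=v_2$ and $u_1v_1\in E(S(G))$]. *)

(* Defs.v *)
From mathcomp Require Import all_boot.
Set Implicit Arguments. Unset Strict Implicit. Unset Printing Implicit Defensive.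

(* A finite simple graph is a finType W with a symmetric irreflexive rel W. *)

Section AT.
Variables (W : finType) (adj : rel W).

Definition is_orientation (D : {set W * W}) : bool :=
  [forall x, forall y, ((x, y) \in D) ==> adj x y] &&
  [forall x, forall y, adj x y ==> (((x, y) \in D) != ((y, x) \in D))].

Definition outdeg (A : {set W * W}) (v : W) : nat := #|[set a in A | a.1 == v]|.
Definition indeg (A : {set W * W}) (v : W) : nat := #|[set a in A | a.2 == v]|.

Definition eulerian (D A : {set W * W}) : bool :=
  (A \subset D) && [forall v, indeg A v == outdeg A v].

Definition even_eulerian (D : {set W * W}) : nat :=
  #|[set A : {set W * W} | eulerian D A && ~~ odd #|A|]|.
Definition odd_eulerian (D : {set W * W}) : nat :=
  #|[set A : {set W * W} | eulerian D A && odd #|A|]|.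

Definition AT_orientation (D : {set W * W}) : bool :=
  is_orientation D && (even_eulerian D != odd_eulerian D).

Definition has_AT_orientation (k : nat) : Prop :=
  exists D : {set W * W}, AT_orientation D && [forall v, outdeg D v < k].

Definition AT_eq (k : nat) : Prop :=
  has_AT_orientation k /\ forall j, j < k -> ~ has_AT_orientation j.
End AT.

Section Subdiv.
Variables (V : finType) (g : rel V).

Definition is_edge (e : {set V}) : bool :=
  [exists u, exists v, g u v && (e == [set u; v])].

Definition edges : finType := {e : {set V} | is_edge e}.

Definition subdiv_adj (x y : V + edges) : bool :=
  match x, y with
  | inl v, inr e => v \in val e
  | inr e, inl v => v \in val e
  | _, _ => false
  end.
End Subdiv.

Definition cycle_adj (n : nat) (i j : 'I_n) : bool :=
  ((j : nat) == i.+1 %% n) || ((i : nat) == j.+1 %% n).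

Definition sprod_adj (V : finType) (g : rel V) (n : nat)
  (x y : (V + edges g) * 'I_n) : bool :=
  [&& (if x.1 is inl _ then true else false), x.1 == y.1 & cycle_adj x.2 y.2]
  || ((x.2 == y.2) && subdiv_adj x.1 y.1).

(* Main.v *)
Require Import Defs.
From mathcomp Require Import all_boot zify.
Set Implicit Arguments. Unset Strict Implicit.

Lemma acyclic_euler (W : finType) (D : {set W*W}) (phi : W -> nat) :
  (forall a, a \in D -> phi a.1 < phi a.2) -> forall A, eulerian D A -> A = set0.
Proof.
move=> HD A /andP[sAD /forallP Heq].
apply/eqP; apply/negPn/negP => /set0Pn [a0 Ha0].
case: (@arg_maxnP _ a0 (fun a => a \in A) (fun a => phi a.2) Ha0) => a Ha Hmax.
have: 0 < indeg A a.2 by apply/card_gt0P; exists a; rewrite inE Ha eqxx.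
rewrite (eqP (Heq a.2)) => /card_gt0P [b]; rewrite inE => /andP[Hb /eqP Hb1].
have := Hmax b Hb; have := HD b (subsetP sAD b Hb); rewrite Hb1.
by move=> lt le; move: (leq_trans lt le); rewrite ltnn.
Qed.

Lemma acyclic_AT (W : finType) (adj : rel W) (D : {set W*W}) (phi : W -> nat) :
  (forall a, a \in D -> phi a.1 < phi a.2) -> is_orientation adj D -> AT_orientation adj D.
Proof.
move=> HD HO; rewrite /AT_orientation HO /=.
have E : forall A, eulerian D A = (A == set0).
  move=> A; apply/idP/eqP => [|->]; first exact: acyclic_euler HD A.
  rewrite /eulerian sub0set /=; apply/forallP => v.
  rewrite /indeg /outdeg.
  have F: forall P : pred (W*W), [set a in (set0 : {set W*W}) | P a] = set0 by move=> P; apply/setP => a; rewrite !inE.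
  by rewrite !F.
rewrite /even_eulerian /odd_eulerian.
have -> : [set A | eulerian D A && ~~ odd #|A|] = [set set0].
  by apply/setP => A; rewrite !inE E; case: eqP => // ->; rewrite cards0.
have -> : [set A | eulerian D A && odd #|A|] = set0.
  by apply/setP => A; rewrite !inE E; case: eqP => // ->; rewrite cards0.
by rewrite cards1 cards0.
Qed.
Section Flip.
Variable T : finType.
Lemma disjP (A B : {set T}) a : [disjoint A & B] -> a \in A -> a \in B -> False.
Proof. by move/disjoint_setI0 => E hA hB; have := in_set0 a; rewrite -E inE hA hB. Qed.

Lemma sepD (X Y : {set T}) (P : pred T) : Y \subset X ->
  #|[set a in X :\: Y | P a]| = #|[set a in X | P a]| - #|[set a in Y | P a]|.
Proof.
move=> sYX.
have -> : [set a in X :\: Y | P a] = [set a in X | P a] :\: [set a in Y | P a].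
  by apply/setP => a; rewrite !inE; case: (a \in Y); case: (a \in X); case: (P a).
rewrite cardsD (setIidPr _) //; apply/subsetP => a; rewrite !inE.
by case/andP => /(subsetP sYX) -> ->.
Qed.

Lemma sepU (X Y : {set T}) (P : pred T) : [disjoint X & Y] ->
  #|[set a in X :|: Y | P a]| = #|[set a in X | P a]| + #|[set a in Y | P a]|.
Proof.
move=> dXY.
have -> : [set a in X :|: Y | P a] = [set a in X | P a] :|: [set a in Y | P a].
  by apply/setP => a; rewrite !inE; case: (a \in Y); case: (a \in X); case: (P a).
rewrite cardsU; have -> : [set a in X | P a] :&: [set a in Y | P a] = set0.
  apply/setP => a; rewrite !inE; apply/negbTE; apply/negP => /andP[/andP[hX _] /andP[hY _]].
  exact: disjP dXY hX hY.
by rewrite cards0 subn0.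
Qed.
End Flip.

Lemma flip_lemma (W : finType) (D C : {set W*W}) : C \subset D -> odd #|C| ->
  (forall v, indeg C v = outdeg C v) ->
  (forall A, eulerian D A -> (C \subset A) || [disjoint C & A]) ->
  even_eulerian D = odd_eulerian D.
Proof.
move=> sCD oC degC clos.
pose f (A : {set W*W}) := (A :\: C) :|: (C :\: A).
have fK : involutive f.
  by move=> A; apply/setP => a; rewrite !inE; case: (a \in A); case: (a \in C).
have key : forall A, eulerian D A -> eulerian D (f A) && (odd #|f A| == ~~ odd #|A|).
  move=> A EA; have := clos A EA; case/andP: EA => sAD /forallP degA.
  case/orP => [sCA | dCA].
  - have -> : f A = A :\: C.
      apply/setP => a; rewrite !inE; case hA: (a \in A); case hC: (a \in C) => //=.
      by rewrite (subsetP sCA a hC) in hA.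
    apply/andP; split; last first.
      rewrite cardsD (setIidPr sCA) oddB ?subset_leq_card //.
      by rewrite oC; case: (odd #|A|).
    apply/andP; split.
      by apply: subset_trans sAD; apply: subsetDl.
    apply/forallP => v; rewrite /indeg /outdeg !sepD //.
    by rewrite -/(indeg A v) -/(outdeg A v) -/(indeg C v) -/(outdeg C v) (eqP (degA v)) degC.
  - have -> : f A = A :|: C.
      apply/setP => a; rewrite !inE; case hA: (a \in A); case hC: (a \in C) => //=.
      by case: (disjP dCA hC); rewrite hA.
    have dAC : [disjoint A & C] by rewrite disjoint_sym.
    apply/andP; split; last first.
      have := sepU predT dAC.
      have E : forall X : {set W*W}, [set a in X | predT a] = X.
        by move=> X; apply/setP => a; rewrite !inE andbT.
      rewrite !E => ->; rewrite oddD oC; by case: (odd #|A|).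
    apply/andP; split; first by rewrite subUset sAD sCD.
    apply/forallP => v; rewrite /indeg /outdeg !sepU //.
    by rewrite -/(indeg A v) -/(outdeg A v) -/(indeg C v) -/(outdeg C v) (eqP (degA v)) degC.
rewrite /even_eulerian /odd_eulerian.
set E0 := [set A | _ && ~~ _]; set E1 := [set A | _ && odd _].
have <- : f @: E0 = E1.
  apply/setP => B; apply/imsetP/idP.
  - case=> A; rewrite !inE => /andP[EA oA] ->.
    by case/andP: (key A EA) => -> /eqP ->.
  - rewrite inE => /andP[EB oB]; exists (f B); last by rewrite fK.
    by rewrite inE; case/andP: (key B EB) => -> /eqP ->; rewrite oB.
by rewrite card_imset //; apply: can_inj fK.
Qed.
Lemma sep_imset (I T : finType) (f : I -> T) (P : pred T) :
  [set a in [set f i | i : I] | P a] = f @: [set i | P (f i)].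
Proof.
apply/setP => a; rewrite !inE; apply/andP/imsetP.
- by case=> /imsetP[i _ ->] hP; exists i; rewrite // inE.
- by case=> i; rewrite inE => hP ->; split => //; apply: imset_f.
Qed.

Lemma cycle_flip (W : finType) (D : {set W*W}) (m : nat) (x : 'I_m -> W) (t : 'I_m -> 'I_m) :
  injective x -> injective t -> odd m ->
  (forall j i, exists k, iter k t j = i) ->
  (forall i, (x i, x (t i)) \in D) ->
  (forall w, outdeg D w <= 1) ->
  even_eulerian D = odd_eulerian D.
Proof.
move=> xinj tinj om reach tD out1.
pose f i := (x i, x (t i)).
have finj : injective f by move=> i j [] /xinj.
pose C := [set f i | i : 'I_m].
apply: (@flip_lemma _ D C).
- by apply/subsetP => a /imsetP[i _ ->]; apply: tD.
- by rewrite card_imset // card_ord.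
- move=> v; rewrite /indeg /outdeg !sep_imset !card_imset //=.
  have -> : [set i | x (t i) == v] = t @^-1: [set i | x i == v].
    by apply/setP => i; rewrite !inE.
  by rewrite card_preimset.
- move=> A EA; case/andP: (EA) => sAD /forallP degA.
  have step : forall i, f i \in A -> f (t i) \in A.
    move=> i hi.
    have : 0 < indeg A (x (t i)) by apply/card_gt0P; exists (f i); rewrite inE hi eqxx.
    rewrite (eqP (degA _)) => /card_gt0P [b]; rewrite inE => /andP[hb /eqP hb1].
    have := out1 (x (t i)); move/card_le1_eqP => H.
    have E : b = f (t i).
      apply: H; rewrite inE ?hb1 ?eqxx ?(subsetP sAD _ hb) //.
      by rewrite tD.
    by rewrite -E.
  have iter_step : forall k j, f j \in A -> f (iter k t j) \in A.
    by elim=> [|k IH] j hj //=; apply: step; apply: IH.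
  case: (boolP [exists j, f j \in A]) => [/existsP [j hj] | hn].
  + apply/orP; left; apply/subsetP => a /imsetP [i _ ->].
    by case: (reach j i) => k <-; apply: iter_step.
  + apply/orP; right; rewrite -setI_eq0; apply/eqP/setP => a; rewrite !inE.
    apply/negbTE/negP => /andP[/imsetP[i _ ->] hi].
    by move/negP: hn; apply; apply/existsP; exists i.
Qed.
Section Main.
Variables (V : finType) (g : rel V) (n' : nat) (n'2 : 2 <= n').
Local Notation n := n'.+1.
Local Notation W := ((V + edges g) * 'I_n)%type.
Local Notation adj := (@sprod_adj V g n).

Lemma modS' m d : (m %% d).+1 %% d = m.+1 %% d.
Proof. by rewrite -addn1 modnDml addn1. Qed.

Lemma mod_neq (i k : nat) : 0 < k < n -> (i + k == i %[mod n]) = false.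
Proof.
move=> hk; rewrite -{2}[i]addn0 eqn_modDl mod0n modn_small; last by case/andP: hk.
by move: hk; case: (k).
Qed.

Lemma cycle_irr (i : 'I_n) : cycle_adj i i = false.
Proof.
rewrite /cycle_adj orbb; apply/negbTE/eqP => h.
have := mod_neq i (k:=1) (ltac:(lia)).
by rewrite addn1 -h modn_small // eqxx.
Qed.

Lemma adj_sym : symmetric adj.
Proof.
move=> [[u|e] i] [[w|f] j]; rewrite /sprod_adj /= ?(eq_sym i) ?(eq_sym (inl u)) ?(eq_sym (inr e)) //.
by rewrite /cycle_adj [(_ == _) || _]orbC.
Qed.

Definition ori (x y : W) : bool :=
  match x.1, y.1 with
  | inr _, inl _ => true
  | inl _, inl _ => x.2 < y.2
  | _, _ => false
  end.
Definition D0 : {set W * W} := [set a | adj a.1 a.2 && ori a.1 a.2].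
Definition phi (x : W) : nat := if x.1 is inl _ then (x.2 : nat).+1 else 0.

Lemma D0_phi a : a \in D0 -> phi a.1 < phi a.2.
Proof.
case: a => [[[u|e] i] [[w|f] j]]; rewrite inE /ori /phi /= => /andP[_ //].
Qed.

Lemma D0_orient : is_orientation adj D0.
Proof.
apply/andP; split; apply/forallP => x; apply/forallP => y.
- by apply/implyP; rewrite inE => /andP[].
- apply/implyP => hxy; rewrite !inE /= hxy (adj_sym y x) hxy /=.
  move: hxy; case: x => [[u|e] i]; case: y => [[w|f] j]; rewrite /ori /sprod_adj /= ?andbF ?orbF //.
  case/andP => _ hc; have hij : i != j by apply: contraTneq hc => ->; rewrite cycle_irr.
  by case: (ltngtP i j) => // /val_inj h; rewrite h eqxx in hij.
Qed.

Lemma arith (i j : nat) : i < n -> j < n -> i < j ->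
  (j == i.+1 %% n) || (i == j.+1 %% n) -> (j == i.+1) || (j == n').
Proof.
move=> hi hj hij /orP[] /eqP E.
- have [h|h] : i.+1 < n \/ i.+1 = n by lia.
  + by move: E; rewrite modn_small // => ->; rewrite eqxx.
  + by move: E; rewrite h modnn => E; rewrite E in hij.
- have [h|h] : j.+1 < n \/ j.+1 = n by lia.
  + by move: E; rewrite modn_small // => E; lia.
  + by apply/orP; right; apply/eqP; lia.
Qed.

Lemma outdeg_le2 (x : W) (A : {set W * W}) y1 y2 :
  [set a in A | a.1 == x] \subset [set (x, y1); (x, y2)] -> outdeg A x < 3.
Proof.
move=> s; rewrite /outdeg; apply: leq_ltn_trans (subset_leq_card s) _.
by rewrite cards2; case: (_ != _).
Qed.

Lemma D0_outdeg x : outdeg D0 x < 3.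
Proof.
case: x => [[v|e] i].
- apply: (@outdeg_le2 _ _ (inl v, inord i.+1) (inl v, inord n')).
  apply/subsetP => [[x' [[w|f] j]]]; rewrite !inE /= => /andP[/andP[hadj hori] /eqP ex];
    subst x'; move: hadj hori; rewrite /sprod_adj /ori /= ?andbF ?orbF //.
  case/andP => /eqP [<-] hc hij.
  case/orP: (arith (ltn_ord i) (ltn_ord j) hij hc) => /eqP E.
  + have -> : j = inord i.+1 by rewrite -E inord_val.
    by rewrite eqxx.
  + have -> : j = inord n' by apply/val_inj; rewrite /= inordK.
    by rewrite eqxx orbT.
- case: (existsP (valP e)) => u /existsP [w /andP [_ /eqP He]].
  apply: (@outdeg_le2 _ _ (inl u, i) (inl w, i)).
  apply/subsetP => [[x' [[z|f] j]]]; rewrite !inE /= => /andP[/andP[hadj hori] /eqP ex];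
    subst x'; move: hadj hori; rewrite /sprod_adj /ori /= ?andbF ?orbF //.
  case/andP => /eqP <-; rewrite He !inE => /orP[] /eqP -> _; by rewrite eqxx ?orbT.
Qed.

Definition so (i : 'I_n) : 'I_n := Ordinal (ltn_pmod i.+1 (ltn0Sn n')).
Definition po (i : 'I_n) : 'I_n := Ordinal (ltn_pmod (i + n') (ltn0Sn n')).

Lemma so_po : cancel po so.
Proof.
move=> i; apply/val_inj => /=; rewrite modS' -addnS modnDr modn_small //.
Qed.

Lemma po_so : cancel so po.
Proof.
move=> i; apply/val_inj => /=; rewrite modnDml addSnnS modnDr modn_small //.
Qed.

Lemma iter_so k (j : 'I_n) : val (iter k so j) = (j + k) %% n.
Proof.
elim: k => [|k IH] /=; first by rewrite addn0 modn_small.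
by rewrite IH modS' addnS.
Qed.

Lemma reach_so (j i : 'I_n) : exists k, iter k so j = i.
Proof.
exists (i + n - j); apply/val_inj; rewrite iter_so.
have -> : j + (i + n - j) = i + n by have := ltn_ord j; lia.
by rewrite modnDr modn_small.
Qed.

Lemma iter_cancel k (i : 'I_n) : iter k po (iter k so i) = i.
Proof.
elim: k i => [|k IH] i //.
by rewrite [iter k.+1 so i]iterSr /= IH po_so.
Qed.

Lemma reach_po (j i : 'I_n) : exists k, iter k po j = i.
Proof. by case: (reach_so i j) => k <-; exists k; apply: iter_cancel. Qed.

Lemma so_so_neq (k : 'I_n) : so (so k) != k.
Proof.
apply/eqP => /(congr1 val) /=; rewrite modS' => h.
have := mod_neq k (k:=2) (ltac:(lia)).
by rewrite addn2 h modn_small // eqxx.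
Qed.

Lemma lower (v0 : V) (D : {set W * W}) : is_orientation adj D ->
  (forall w, outdeg D w <= 1) -> odd n -> even_eulerian D = odd_eulerian D.
Proof.
move=> /andP[_ /forallP HO] out1 on.
pose x i : W := (inl v0, i).
have xinj : injective x by move=> i j [].
have adjs : forall i, adj (x i) (x (so i)).
  by move=> i; rewrite /sprod_adj /= eqxx /cycle_adj eqxx.
have orient : forall a b, adj a b -> (b, a) \notin D -> (a, b) \in D.
  move=> a b hab hn; have := HO a; move/forallP/(_ b)/implyP/(_ hab).
  by move: hn; case: ((b, a) \in D); case: ((a, b) \in D).
case: (boolP [exists j, (x (so j), x j) \in D]) => [/existsP[j hj] | hn].
- have stepQ : forall k, (x (so k), x k) \in D -> (x (so (so k)), x (so k)) \in D.
    move=> k hk; apply/negPn/negP => hn.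
    have h2 := orient _ _ (adjs (so k)) hn.
    have := out1 (x (so k)); move/card_le1_eqP => H.
    have := H (x (so k), x k) (x (so k), x (so (so k))).
    rewrite !inE hk h2 !eqxx => /(_ isT isT) /(congr1 snd) /= /xinj E.
    by move: (so_so_neq k); rewrite E eqxx.
  have allQ : forall i, (x (so i), x i) \in D.
    move=> i; case: (reach_so j i) => k <-.
    by elim: k => [|k IH] //=; apply: stepQ.
  apply: (@cycle_flip _ D n x po) => //.
  + exact: can_inj so_po.
  + exact: reach_po.
  + by move=> i; rewrite -{1}(so_po i); apply: allQ.
- apply: (@cycle_flip _ D n x so) => //.
  + exact: can_inj po_so.
  + exact: reach_so.
  + move=> i; apply: orient => //; apply/negP => hi.
    by move/negP: hn; apply; apply/existsP; exists i.
Qed.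
End Main.

Theorem corollary3p2 (V : finType) (g : rel V)
  (gsym : symmetric g) (girr : irreflexive g) (Vne : 0 < #|V|)
  (n : nat) (nodd : odd n) (n3 : 3 <= n) :
  AT_eq (@sprod_adj V g n) 3.
Proof.
case: n nodd n3 => [|n'] // nodd n3.
have n'2 : 2 <= n' by [].
split.
- exists (D0 g n'); rewrite (acyclic_AT (@D0_phi V g n')) ?D0_orient //=.
  by apply/forallP => x; apply: D0_outdeg.
- move=> j hj [D /andP [/andP [HO Hne] /forallP Hout]].
  case/card_gt0P: Vne => v0 _.
  move/negP: Hne; apply; apply/eqP; apply: (lower n'2 v0 HO) => // w.
  by have := Hout w; move=> h; rewrite -ltnS; apply: leq_trans h _; rewrite -ltnS.
Qed.
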